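(* For every $a>0$ and $\alpha>0$, the first Robin eigenvalue of an interval $I_a$ of length $a$ satisfies \[ \frac{2\alpha\pi^2}{a(\pi^2+2\alpha a)}\le\lambda_1(I_a,\alpha)\le\frac{\pi^2}{a^2}\cdot\frac{\pi^2+2a\alpha-\sqrt{64a\alpha+(\pi^2-2a\alpha)^2}}{2(\pi^2-8)}. \]
   Context: For an interval $I_a\subset\mathbb{R}$ of length $a>0$ and $\alpha>0$, $\lambda_1(I_a,\alpha)<\lambda_2(I_a,\alpha)<\cdots$ denote the eigenvalues of the Robin problem $-u''=\lambda u$ on $I_a$ with $\partial_\nu u+\alpha u=0$ at both endpoints ($\partial_\nu$ the outward derivative). Equivalently, $\lambda_1(I_a,\alpha)$ is the unique root in $(0,\pi^2/a^2)$ of $\alpha=\sqrt\lambda\tan(a\sqrt\lambda/2)$. *)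

(* Defs.v *)
From Stdlib Require Import Reals.
Open Scope R_scope.

(* lambda1(I_a, alpha): by the context, the first Robin eigenvalue of an
   interval of length a with parameter alpha is the unique root in
   (0, PI^2/a^2) of  alpha = sqrt(lambda) * tan(a * sqrt(lambda) / 2).
   [is_robin_lambda1 a alpha lam] says that lam is this root. *)
Definition is_robin_lambda1 (a alpha lam : R) : Prop :=
  0 < lam < PI ^ 2 / a ^ 2 /\ alpha = sqrt lam * tan (a * sqrt lam / 2).

(* Main.v *)
Require Import Defs.
From Stdlib Require Import Reals.
From Stdlib Require Import Lra.
Open Scope R_scope.

Ltac approx_tac := intros;
  unfold sin_approx, cos_approx, sin_term, cos_term; cbn [sum_f_R0 Nat.mul Nat.add];
  repeat rewrite fact_simpl; repeat rewrite mult_INR; cbn [Factorial.fact];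
  repeat rewrite S_INR; rewrite ?INR_0; field.

Lemma sin1 a : sin_approx a 1 = a - a^3/6.
Proof. approx_tac. Qed.
Lemma sin2 a : sin_approx a 2 = a - a^3/6 + a^5/120.
Proof. approx_tac. Qed.
Lemma sin3 a : sin_approx a 3 = a - a^3/6 + a^5/120 - a^7/5040.
Proof. approx_tac. Qed.
Lemma sin4 a : sin_approx a 4 = a - a^3/6 + a^5/120 - a^7/5040 + a^9/362880.
Proof. approx_tac. Qed.
Lemma cos1 a : cos_approx a 1 = 1 - a^2/2.
Proof. approx_tac. Qed.
Lemma cos2 a : cos_approx a 2 = 1 - a^2/2 + a^4/24.
Proof. approx_tac. Qed.
Lemma cos3 a : cos_approx a 3 = 1 - a^2/2 + a^4/24 - a^6/720.
Proof. approx_tac. Qed.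
Lemma cos4 a : cos_approx a 4 = 1 - a^2/2 + a^4/24 - a^6/720 + a^8/40320.
Proof. approx_tac. Qed.
Lemma cos5 a : cos_approx a 5 = 1 - a^2/2 + a^4/24 - a^6/720 + a^8/40320 - a^10/3628800.
Proof. approx_tac. Qed.
Lemma cos8 a : cos_approx a 8 = 1 - a^2/2 + a^4/24 - a^6/720 + a^8/40320 - a^10/3628800
  + a^12/479001600 - a^14/87178291200 + a^16/20922789888000.
Proof. approx_tac. Qed.

Lemma PI_lb : 333/106 <= PI.
Proof.
  assert (H : 333/212 < PI/2).
  { apply PI2_lower_bound; [lra|].
    destruct (pre_cos_bound (333/212) 2) as [H _]; [lra|lra|].
    change (2*2+1)%nat with 5%nat in H. rewrite cos5 in H. lra. }
  lra.
Qed.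

Lemma PI_ub : PI <= 355/113.
Proof.
  destruct (Rle_dec PI (355/113)) as [H|H]; [exact H|].
  exfalso.
  assert (H1 : 0 <= cos (355/226)).
  { apply cos_ge_0; lra. }
  destruct (pre_cos_bound (355/226) 3) as [_ H2]; [lra|lra|].
  change (2*(3+1))%nat with 8%nat in H2. rewrite cos8 in H2. lra.
Qed.
Lemma mono (u d h D : R) (i j : nat) : 0 <= u <= h -> 0 <= d <= D ->
  0 <= u^i * d^j <= h^i * D^j.
Proof.
  intros [H1 H2] [H3 H4]. split.
  - apply Rmult_le_pos; apply pow_le; lra.
  - apply Rmult_le_compat; try (apply pow_le; lra); apply pow_incr; lra.
Qed.
Definition Qg0 (t p : R) : R := (4) * t^0 * p^0 + (-(1/3)) * t^0 * p^2 + (-(2/3)) * t^2 * p^0 + (-(1/120)) * t^2 * p^2 + (1/30) * t^4 * p^0.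
Lemma Qg0_piece0 (u d : R) : 0 <= u <= (3/4) -> 0 <= d <= (1/11978) -> 0 <= Qg0 ((0) + u) ((333/106) + d).
Proof.
  intros Hu Hd.
  replace (Qg0 ((0) + u) ((333/106) + d)) with ((7981/11236) * u^0 * d^0 + (-(111/53)) * u^0 * d^1 + (-(1/3)) * u^0 * d^2 + (-(1009769/1348320)) * u^2 * d^0 + (-(111/2120)) * u^2 * d^1 + (-(1/120)) * u^2 * d^2 + (1/30) * u^4 * d^0) by (unfold Qg0; field).
  pose proof (mono u d (3/4) (1/11978) 0 1 Hu Hd).
  pose proof (mono u d (3/4) (1/11978) 0 2 Hu Hd).
  pose proof (mono u d (3/4) (1/11978) 2 0 Hu Hd).
  pose proof (mono u d (3/4) (1/11978) 2 1 Hu Hd).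
  pose proof (mono u d (3/4) (1/11978) 2 2 Hu Hd).
  pose proof (mono u d (3/4) (1/11978) 4 0 Hu Hd).
  lra.
Qed.
Lemma Qg0_nonneg (t p : R) : 0 <= t <= (3/4) -> (333/106) <= p <= (355/113) -> 0 <= Qg0 t p.
Proof.
  intros Ht Hp.
  { pose proof (Qg0_piece0 (t - (0)) (p - (333/106)) ltac:(lra) ltac:(lra)) as H.
    replace ((0) + (t - (0))) with t in H by ring. replace ((333/106) + (p - (333/106))) with p in H by ring. exact H. }
Qed.
Definition Qg1 (t p : R) : R := (-4) * t^0 * p^1 + (1/2) * t^0 * p^3 + (4) * t^1 * p^0 + (-1) * t^1 * p^2 + (2) * t^2 * p^1 + (-(1/12)) * t^2 * p^3 + (-2) * t^3 * p^0 + (1/6) * t^3 * p^2 + (-(1/6)) * t^4 * p^1 + (1/6) * t^5 * p^0.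
Lemma Qg1_piece0 (u d : R) : 0 <= u <= (31/64) -> 0 <= d <= (1/11978) -> 0 <= Qg1 ((0) + u) ((333/106) + d).
Proof.
  intros Hu Hd.
  replace (Qg1 ((0) + u) ((333/106) + d)) with ((6993333/2382032) * u^0 * d^0 + (242779/22472) * u^0 * d^1 + (999/212) * u^0 * d^2 + (1/2) * u^0 * d^3 + (-(65945/11236)) * u^1 * d^0 + (-(333/53)) * u^1 * d^1 + (-1) * u^1 * d^2 + (17624025/4764064) * u^2 * d^0 + (-(21001/44944)) * u^2 * d^1 + (-(333/424)) * u^2 * d^2 + (-(1/12)) * u^2 * d^3 + (-(7981/22472)) * u^3 * d^0 + (111/106) * u^3 * d^1 + (1/6) * u^3 * d^2 + (-(111/212)) * u^4 * d^0 + (-(1/6)) * u^4 * d^1 + (1/6) * u^5 * d^0) by (unfold Qg1; field).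
  pose proof (mono u d (31/64) (1/11978) 0 1 Hu Hd).
  pose proof (mono u d (31/64) (1/11978) 0 2 Hu Hd).
  pose proof (mono u d (31/64) (1/11978) 0 3 Hu Hd).
  pose proof (mono u d (31/64) (1/11978) 1 0 Hu Hd).
  pose proof (mono u d (31/64) (1/11978) 1 1 Hu Hd).
  pose proof (mono u d (31/64) (1/11978) 1 2 Hu Hd).
  pose proof (mono u d (31/64) (1/11978) 2 0 Hu Hd).
  pose proof (mono u d (31/64) (1/11978) 2 1 Hu Hd).
  pose proof (mono u d (31/64) (1/11978) 2 2 Hu Hd).
  pose proof (mono u d (31/64) (1/11978) 2 3 Hu Hd).
  pose proof (mono u d (31/64) (1/11978) 3 0 Hu Hd).
  pose proof (mono u d (31/64) (1/11978) 3 1 Hu Hd).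
  pose proof (mono u d (31/64) (1/11978) 3 2 Hu Hd).
  pose proof (mono u d (31/64) (1/11978) 4 0 Hu Hd).
  pose proof (mono u d (31/64) (1/11978) 4 1 Hu Hd).
  pose proof (mono u d (31/64) (1/11978) 5 0 Hu Hd).
  lra.
Qed.
Lemma Qg1_piece1 (u d : R) : 0 <= u <= (5/16) -> 0 <= d <= (1/11978) -> 0 <= Qg1 ((31/64) + u) ((333/106) + d).
Proof.
  intros Hu Hd.
  replace (Qg1 ((31/64) + u) ((333/106) + d)) with ((859609664113139/959132769189888) * u^0 * d^0 + (2194379358023/282763198464) * u^0 * d^1 + (338662715/83361792) * u^0 * d^2 + (23615/49152) * u^0 * d^3 + (-(40874532425279/14986449518592)) * u^1 * d^0 + (-(6709430839/1104543744)) * u^1 * d^1 + (-(713579/434176)) * u^1 * d^2 + (-(31/384)) * u^1 * d^3 + (308584322239/117081636864) * u^2 * d^0 + (9432103/11505664) * u^2 * d^1 + (-(3685/6784)) * u^2 * d^2 + (-(1/12)) * u^2 * d^3 + (-(33777187/34516992)) * u^3 * d^0 + (3685/5088) * u^3 * d^1 + (1/6) * u^3 * d^2 + (-(2441/20352)) * u^4 * d^0 + (-(1/6)) * u^4 * d^1 + (1/6) * u^5 * d^0) by (unfold Qg1; field).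
  pose proof (mono u d (5/16) (1/11978) 0 1 Hu Hd).
  pose proof (mono u d (5/16) (1/11978) 0 2 Hu Hd).
  pose proof (mono u d (5/16) (1/11978) 0 3 Hu Hd).
  pose proof (mono u d (5/16) (1/11978) 1 0 Hu Hd).
  pose proof (mono u d (5/16) (1/11978) 1 1 Hu Hd).
  pose proof (mono u d (5/16) (1/11978) 1 2 Hu Hd).
  pose proof (mono u d (5/16) (1/11978) 1 3 Hu Hd).
  pose proof (mono u d (5/16) (1/11978) 2 0 Hu Hd).
  pose proof (mono u d (5/16) (1/11978) 2 1 Hu Hd).
  pose proof (mono u d (5/16) (1/11978) 2 2 Hu Hd).
  pose proof (mono u d (5/16) (1/11978) 2 3 Hu Hd).
  pose proof (mono u d (5/16) (1/11978) 3 0 Hu Hd).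
  pose proof (mono u d (5/16) (1/11978) 3 1 Hu Hd).
  pose proof (mono u d (5/16) (1/11978) 3 2 Hu Hd).
  pose proof (mono u d (5/16) (1/11978) 4 0 Hu Hd).
  pose proof (mono u d (5/16) (1/11978) 4 1 Hu Hd).
  pose proof (mono u d (5/16) (1/11978) 5 0 Hu Hd).
  lra.
Qed.
Lemma Qg1_piece2 (u d : R) : 0 <= u <= (1/32) -> 0 <= d <= (1/11978) -> 0 <= Qg1 ((51/64) + u) ((333/106) + d).
Proof.
  intros Hu Hd.
  replace (Qg1 ((51/64) + u) ((333/106) + d)) with ((86574247394253/319710923063296) * u^0 * d^0 + (562020752701/94254399488) * u^0 * d^1 + (97283325/27787264) * u^0 * d^2 + (7325/16384) * u^0 * d^3 + (-(6861519946853/4995483172864)) * u^1 * d^0 + (-(1977203553/368181248)) * u^1 * d^1 + (-(839779/434176)) * u^1 * d^2 + (-(17/128)) * u^1 * d^3 + (66299941593/39027212288) * u^2 * d^0 + (16120703/11505664) * u^2 * d^1 + (-(2625/6784)) * u^2 * d^2 + (-(1/12)) * u^2 * d^3 + (-(11111369/11505664)) * u^3 * d^0 + (875/1696) * u^3 * d^1 + (1/6) * u^3 * d^2 + (953/6784) * u^4 * d^0 + (-(1/6)) * u^4 * d^1 + (1/6) * u^5 * d^0) by (unfold Qg1; field).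
  pose proof (mono u d (1/32) (1/11978) 0 1 Hu Hd).
  pose proof (mono u d (1/32) (1/11978) 0 2 Hu Hd).
  pose proof (mono u d (1/32) (1/11978) 0 3 Hu Hd).
  pose proof (mono u d (1/32) (1/11978) 1 0 Hu Hd).
  pose proof (mono u d (1/32) (1/11978) 1 1 Hu Hd).
  pose proof (mono u d (1/32) (1/11978) 1 2 Hu Hd).
  pose proof (mono u d (1/32) (1/11978) 1 3 Hu Hd).
  pose proof (mono u d (1/32) (1/11978) 2 0 Hu Hd).
  pose proof (mono u d (1/32) (1/11978) 2 1 Hu Hd).
  pose proof (mono u d (1/32) (1/11978) 2 2 Hu Hd).
  pose proof (mono u d (1/32) (1/11978) 2 3 Hu Hd).
  pose proof (mono u d (1/32) (1/11978) 3 0 Hu Hd).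
  pose proof (mono u d (1/32) (1/11978) 3 1 Hu Hd).
  pose proof (mono u d (1/32) (1/11978) 3 2 Hu Hd).
  pose proof (mono u d (1/32) (1/11978) 4 0 Hu Hd).
  pose proof (mono u d (1/32) (1/11978) 4 1 Hu Hd).
  pose proof (mono u d (1/32) (1/11978) 5 0 Hu Hd).
  lra.
Qed.
Lemma Qg1_nonneg (t p : R) : 0 <= t <= (53/64) -> (333/106) <= p <= (355/113) -> 0 <= Qg1 t p.
Proof.
  intros Ht Hp.
  destruct (Rle_dec t (31/64)) as [Hc0|Hc0].
  { pose proof (Qg1_piece0 (t - (0)) (p - (333/106)) ltac:(lra) ltac:(lra)) as H.
    replace ((0) + (t - (0))) with t in H by ring. replace ((333/106) + (p - (333/106))) with p in H by ring. exact H. }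
  destruct (Rle_dec t (51/64)) as [Hc1|Hc1].
  { pose proof (Qg1_piece1 (t - (31/64)) (p - (333/106)) ltac:(lra) ltac:(lra)) as H.
    replace ((31/64) + (t - (31/64))) with t in H by ring. replace ((333/106) + (p - (333/106))) with p in H by ring. exact H. }
  { pose proof (Qg1_piece2 (t - (51/64)) (p - (333/106)) ltac:(lra) ltac:(lra)) as H.
    replace ((51/64) + (t - (51/64))) with t in H by ring. replace ((333/106) + (p - (333/106))) with p in H by ring. exact H. }
Qed.
Definition Qf0 (t p : R) : R := (-32) * t^0 * p^0 + (1/3) * t^0 * p^4 + (16) * t^2 * p^0 + (-(4/3)) * t^2 * p^2 + (-(1/30)) * t^2 * p^4 + (-(4/3)) * t^4 * p^0 + (2/15) * t^4 * p^2 + (1/840) * t^4 * p^4 + (2/45) * t^6 * p^0 + (-(1/210)) * t^6 * p^2 + (-(1/40320)) * t^6 * p^4 + (-(1/1260)) * t^8 * p^0 + (1/10080) * t^8 * p^2.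
Lemma Qf0_piece0 (u d : R) : 0 <= u <= (3/4) -> 0 <= d <= (1/11978) -> 0 <= Qf0 ((0) + u) ((333/106) + d).
Proof.
  intros Hu Hd.
  replace (Qf0 ((0) + u) ((333/106) + d)) with ((58863835/126247696) * u^0 * d^0 + (12308679/297754) * u^0 * d^1 + (110889/5618) * u^0 * d^2 + (222/53) * u^0 * d^3 + (1/3) * u^0 * d^4 + (-(511809467/1262476960)) * u^2 * d^0 + (-(37252599/2977540)) * u^2 * d^1 + (-(557387/168540)) * u^2 * d^2 + (-(111/265)) * u^2 * d^3 + (-(1/30)) * u^2 * d^4 + (10445216849/106048064640) * u^4 * d^0 + (16430331/16674224) * u^4 * d^1 + (961883/4719120) * u^4 * d^2 + (111/7420) * u^4 * d^3 + (1/840) * u^4 * d^4 + (-(25282669457/5090307102720)) * u^6 * d^0 + (-(1257519/38112512)) * u^6 * d^1 + (-(470441/75505920)) * u^6 * d^2 + (-(37/118720)) * u^6 * d^3 + (-(1/40320)) * u^6 * d^4 + (21001/113258880) * u^8 * d^0 + (37/59360) * u^8 * d^1 + (1/10080) * u^8 * d^2) by (unfold Qf0; field).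
  pose proof (mono u d (3/4) (1/11978) 0 1 Hu Hd).
  pose proof (mono u d (3/4) (1/11978) 0 2 Hu Hd).
  pose proof (mono u d (3/4) (1/11978) 0 3 Hu Hd).
  pose proof (mono u d (3/4) (1/11978) 0 4 Hu Hd).
  pose proof (mono u d (3/4) (1/11978) 2 0 Hu Hd).
  pose proof (mono u d (3/4) (1/11978) 2 1 Hu Hd).
  pose proof (mono u d (3/4) (1/11978) 2 2 Hu Hd).
  pose proof (mono u d (3/4) (1/11978) 2 3 Hu Hd).
  pose proof (mono u d (3/4) (1/11978) 2 4 Hu Hd).
  pose proof (mono u d (3/4) (1/11978) 4 0 Hu Hd).
  pose proof (mono u d (3/4) (1/11978) 4 1 Hu Hd).
  pose proof (mono u d (3/4) (1/11978) 4 2 Hu Hd).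
  pose proof (mono u d (3/4) (1/11978) 4 3 Hu Hd).
  pose proof (mono u d (3/4) (1/11978) 4 4 Hu Hd).
  pose proof (mono u d (3/4) (1/11978) 6 0 Hu Hd).
  pose proof (mono u d (3/4) (1/11978) 6 1 Hu Hd).
  pose proof (mono u d (3/4) (1/11978) 6 2 Hu Hd).
  pose proof (mono u d (3/4) (1/11978) 6 3 Hu Hd).
  pose proof (mono u d (3/4) (1/11978) 6 4 Hu Hd).
  pose proof (mono u d (3/4) (1/11978) 8 0 Hu Hd).
  pose proof (mono u d (3/4) (1/11978) 8 1 Hu Hd).
  pose proof (mono u d (3/4) (1/11978) 8 2 Hu Hd).
  lra.
Qed.
Lemma Qf0_nonneg (t p : R) : 0 <= t <= (3/4) -> (333/106) <= p <= (355/113) -> 0 <= Qf0 t p.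
Proof.
  intros Ht Hp.
  { pose proof (Qf0_piece0 (t - (0)) (p - (333/106)) ltac:(lra) ltac:(lra)) as H.
    replace ((0) + (t - (0))) with t in H by ring. replace ((333/106) + (p - (333/106))) with p in H by ring. exact H. }
Qed.
Definition Qf1 (t p : R) : R := (20) * t^0 * p^2 + (-2) * t^0 * p^4 + (-48) * t^1 * p^1 + (14/3) * t^1 * p^3 + (32) * t^2 * p^0 + (-6) * t^2 * p^2 + (1/3) * t^2 * p^4 + (8) * t^3 * p^1 + (-(13/15)) * t^3 * p^3 + (-(16/3)) * t^4 * p^0 + (7/10) * t^4 * p^2 + (-(1/60)) * t^4 * p^4 + (-(2/5)) * t^5 * p^1 + (19/420) * t^5 * p^3 + (4/15) * t^6 * p^0 + (-(41/1260)) * t^6 * p^2 + (1/2520) * t^6 * p^4 + (1/105) * t^7 * p^1 + (-(109/90720)) * t^7 * p^3 + (-(2/315)) * t^8 * p^0 + (13/15120) * t^8 * p^2 + (-(1/181440)) * t^8 * p^4 + (-(1/7560)) * t^9 * p^1 + (1/60480) * t^9 * p^3 + (1/11340) * t^10 * p^0 + (-(1/90720)) * t^10 * p^2.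
Lemma Qf1_piece0 (u d : R) : 0 <= u <= (25/64) -> 0 <= d <= (1/11978) -> 0 <= Qf1 ((0) + u) ((333/106) + d).
Proof.
  intros Hu Hd.
  replace (Qf1 ((0) + u) ((333/106) + d)) with ((163117719/63123848) * u^0 * d^0 + (-(18218097/148877)) * u^0 * d^1 + (-(276487/2809)) * u^0 * d^2 + (-(1332/53)) * u^0 * d^3 + (-2) * u^0 * d^4 + (-(3637359/595508)) * u^1 * d^0 + (506559/5618) * u^1 * d^1 + (2331/53) * u^1 * d^2 + (14/3) * u^1 * d^3 + (663023555/126247696) * u^2 * d^0 + (1083915/297754) * u^2 * d^1 + (77181/5618) * u^2 * d^2 + (222/53) * u^2 * d^3 + (1/3) * u^2 * d^4 + (-(10349307/5955080)) * u^3 * d^0 + (-(992117/56180)) * u^3 * d^1 + (-(4329/530)) * u^3 * d^2 + (-(13/15)) * u^3 * d^3 + (-(365783273/7574861760)) * u^4 * d^0 + (13882437/5955080) * u^4 * d^1 + (-(32237/112360)) * u^4 * d^2 + (-(111/530)) * u^4 * d^3 + (-(1/60)) * u^4 * d^4 + (24335973/166742240) * u^5 * d^0 + (295535/314608) * u^5 * d^1 + (6327/14840) * u^5 * d^2 + (19/420) * u^5 * d^3 + (-(335531993/21209612928)) * u^6 * d^0 + (-(12942119/83371120)) * u^6 * d^1 + (-(18287/2022480)) * u^6 * d^2 + (37/7420) * u^6 * d^3 + (1/2520) * u^6 * d^4 + (-(9780321/1333937920)) * u^7 * d^0 + (-(140491/5393280)) * u^7 * d^1 + (-(4033/356160)) *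 u^7 * d^2 + (-(109/90720)) * u^7 * d^3 + (4070477479/2545153551360) * u^8 * d^0 + (9441401/2000906880) * u^8 * d^1 + (181247/339776640) * u^8 * d^2 + (-(37/534240)) * u^8 * d^3 + (-(1/181440)) * u^8 * d^4 + (777037/8003627520) * u^9 * d^0 + (242779/679553280) * u^9 * d^1 + (37/237440) * u^9 * d^2 + (1/60480) * u^9 * d^3 + (-(21001/1019329920)) * u^10 * d^0 + (-(37/534240)) * u^10 * d^1 + (-(1/90720)) * u^10 * d^2) by (unfold Qf1; field).
  pose proof (mono u d (25/64) (1/11978) 0 1 Hu Hd).
  pose proof (mono u d (25/64) (1/11978) 0 2 Hu Hd).
  pose proof (mono u d (25/64) (1/11978) 0 3 Hu Hd).
  pose proof (mono u d (25/64) (1/11978) 0 4 Hu Hd).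
  pose proof (mono u d (25/64) (1/11978) 1 0 Hu Hd).
  pose proof (mono u d (25/64) (1/11978) 1 1 Hu Hd).
  pose proof (mono u d (25/64) (1/11978) 1 2 Hu Hd).
  pose proof (mono u d (25/64) (1/11978) 1 3 Hu Hd).
  pose proof (mono u d (25/64) (1/11978) 2 0 Hu Hd).
  pose proof (mono u d (25/64) (1/11978) 2 1 Hu Hd).
  pose proof (mono u d (25/64) (1/11978) 2 2 Hu Hd).
  pose proof (mono u d (25/64) (1/11978) 2 3 Hu Hd).
  pose proof (mono u d (25/64) (1/11978) 2 4 Hu Hd).
  pose proof (mono u d (25/64) (1/11978) 3 0 Hu Hd).
  pose proof (mono u d (25/64) (1/11978) 3 1 Hu Hd).
  pose proof (mono u d (25/64) (1/11978) 3 2 Hu Hd).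
  pose proof (mono u d (25/64) (1/11978) 3 3 Hu Hd).
  pose proof (mono u d (25/64) (1/11978) 4 0 Hu Hd).
  pose proof (mono u d (25/64) (1/11978) 4 1 Hu Hd).
  pose proof (mono u d (25/64) (1/11978) 4 2 Hu Hd).
  pose proof (mono u d (25/64) (1/11978) 4 3 Hu Hd).
  pose proof (mono u d (25/64) (1/11978) 4 4 Hu Hd).
  pose proof (mono u d (25/64) (1/11978) 5 0 Hu Hd).
  pose proof (mono u d (25/64) (1/11978) 5 1 Hu Hd).
  pose proof (mono u d (25/64) (1/11978) 5 2 Hu Hd).
  pose proof (mono u d (25/64) (1/11978) 5 3 Hu Hd).
  pose proof (mono u d (25/64) (1/11978) 6 0 Hu Hd).
  pose proof (mono u d (25/64) (1/11978) 6 1 Hu Hd).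
  pose proof (mono u d (25/64) (1/11978) 6 2 Hu Hd).
  pose proof (mono u d (25/64) (1/11978) 6 3 Hu Hd).
  pose proof (mono u d (25/64) (1/11978) 6 4 Hu Hd).
  pose proof (mono u d (25/64) (1/11978) 7 0 Hu Hd).
  pose proof (mono u d (25/64) (1/11978) 7 1 Hu Hd).
  pose proof (mono u d (25/64) (1/11978) 7 2 Hu Hd).
  pose proof (mono u d (25/64) (1/11978) 7 3 Hu Hd).
  pose proof (mono u d (25/64) (1/11978) 8 0 Hu Hd).
  pose proof (mono u d (25/64) (1/11978) 8 1 Hu Hd).
  pose proof (mono u d (25/64) (1/11978) 8 2 Hu Hd).
  pose proof (mono u d (25/64) (1/11978) 8 3 Hu Hd).
  pose proof (mono u d (25/64) (1/11978) 8 4 Hu Hd).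
  pose proof (mono u d (25/64) (1/11978) 9 0 Hu Hd).
  pose proof (mono u d (25/64) (1/11978) 9 1 Hu Hd).
  pose proof (mono u d (25/64) (1/11978) 9 2 Hu Hd).
  pose proof (mono u d (25/64) (1/11978) 9 3 Hu Hd).
  pose proof (mono u d (25/64) (1/11978) 10 0 Hu Hd).
  pose proof (mono u d (25/64) (1/11978) 10 1 Hu Hd).
  pose proof (mono u d (25/64) (1/11978) 10 2 Hu Hd).
  lra.
Qed.
Lemma Qf1_piece1 (u d : R) : 0 <= u <= (19/64) -> 0 <= d <= (1/11978) -> 0 <= Qf1 ((25/64) + u) ((333/106) + d).
Proof.
  intros Hu Hd.
  replace (Qf1 ((25/64) + u) ((333/106) + d)) with ((84515513737769958161204592949/94318786989303145120879607808) * u^0 * d^0 + (-(12988627926687016363408015333/148299979542929473460502528)) * u^0 * d^1 + (-(668544149443522517887528979/8394338464694121139273728)) * u^0 * d^2 + (-(112482765632259901150067/4949492019277194067968)) * u^0 * d^3 + (-(2844679701917998283/1459166279268040704)) * u^0 * d^4 + (-(14422681092689888924103431521/5158058663477515748798103552)) * u^1 * d^0 + (231364591869740102753071247/2703385043751318526623744) * u^1 * d^1 + (23391930841533693338519639/459065384787959749804032) * u^1 * d^2 + (4059003521555881492267/541350689608443101184) * u^1 * d^3 + (5116350874938475/19949538974367744) * u^1 * d^4 + (2772790927743944991277315/852853614992975487565824) * u^2 * d^0 + (-(19335475098926023667515/1340964803448074665984)) * u^2 * d^1 + (19857290593890290543509/4781931091541247393792) * u^2 * d^2 + (2121546101250548257/704883710427660288)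 * u^2 * d^3 + (198381074380789/623423092948992) * u^2 * d^4 + (-(121029860701086826434611/74957837255241986211840)) * u^3 * d^0 + (-(10549813995534458867527/825007642746374062080)) * u^3 * d^1 + (-(17757352401873692089/2223740276944404480)) * u^3 * d^2 + (-(185022793231142021/165207119631482880)) * u^3 * d^3 + (-(124545424835/4870492913664)) * u^3 * d^4 + (880600204407509118523/4684864828452624138240) * u^4 * d^0 + (9242811422164298167/2455379889126113280) * u^4 * d^1 + (1466696164121647829/2918659113489530880) * u^4 * d^2 + (-(579595691143783/5162722488483840)) * u^4 * d^3 + (-(23998422467/1522029035520)) * u^4 * d^4 + (2589188609885123443/28467060589555875840) * u^5 * d^0 + (4553938520376325/8951905845772288) * u^5 * d^1 + (8461457708990563/22802024324136960) * u^5 * d^2 + (1422237952939/26889179627520) * u^5 * d^3 + (1084045/1189085184) * u^5 * d^4 + (-(45875959265653831/1601272158162518016)) * u^6 * d^0 + (-(2578822759584661/12588617595617280)) * u^6 * d^1 + (-(3766341769501/101794751447040)) * u^6 * d^2 + (937797347/630215147520) * u^6 * d^3 + (69353/185794560) * u^6 * d^4 + (-(60927855806309/31274846839111680)) * u^7 * d^0 + (-(161236425437/16391429160960)) * u^7 * d^1 + (-(8238495823/927816744960)) * u^7 * d^2 + (-(13068121/9847111680)) * u^7 * d^3 + (-(5/290304)) * u^7 * d^4 + (781503681641/434372872765440) * u^8 * d^0 + (3755693383/682976215040) * u^8 * d^1 + (49981679/49704468480) * u^8 * d^2 + (-(761/68382720)) * u^8 * d^3 + (-(1/181440)) * u^8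 * d^4 + (28708367/1728783544320) * u^9 * d^0 + (235741/2718213120) * u^9 * d^1 + (17351/153861120) * u^9 * d^2 + (1/60480) * u^9 * d^3 + (-(21001/1019329920)) * u^10 * d^0 + (-(37/534240)) * u^10 * d^1 + (-(1/90720)) * u^10 * d^2) by (unfold Qf1; field).
  pose proof (mono u d (19/64) (1/11978) 0 1 Hu Hd).
  pose proof (mono u d (19/64) (1/11978) 0 2 Hu Hd).
  pose proof (mono u d (19/64) (1/11978) 0 3 Hu Hd).
  pose proof (mono u d (19/64) (1/11978) 0 4 Hu Hd).
  pose proof (mono u d (19/64) (1/11978) 1 0 Hu Hd).
  pose proof (mono u d (19/64) (1/11978) 1 1 Hu Hd).
  pose proof (mono u d (19/64) (1/11978) 1 2 Hu Hd).
  pose proof (mono u d (19/64) (1/11978) 1 3 Hu Hd).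
  pose proof (mono u d (19/64) (1/11978) 1 4 Hu Hd).
  pose proof (mono u d (19/64) (1/11978) 2 0 Hu Hd).
  pose proof (mono u d (19/64) (1/11978) 2 1 Hu Hd).
  pose proof (mono u d (19/64) (1/11978) 2 2 Hu Hd).
  pose proof (mono u d (19/64) (1/11978) 2 3 Hu Hd).
  pose proof (mono u d (19/64) (1/11978) 2 4 Hu Hd).
  pose proof (mono u d (19/64) (1/11978) 3 0 Hu Hd).
  pose proof (mono u d (19/64) (1/11978) 3 1 Hu Hd).
  pose proof (mono u d (19/64) (1/11978) 3 2 Hu Hd).
  pose proof (mono u d (19/64) (1/11978) 3 3 Hu Hd).
  pose proof (mono u d (19/64) (1/11978) 3 4 Hu Hd).
  pose proof (mono u d (19/64) (1/11978) 4 0 Hu Hd).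
  pose proof (mono u d (19/64) (1/11978) 4 1 Hu Hd).
  pose proof (mono u d (19/64) (1/11978) 4 2 Hu Hd).
  pose proof (mono u d (19/64) (1/11978) 4 3 Hu Hd).
  pose proof (mono u d (19/64) (1/11978) 4 4 Hu Hd).
  pose proof (mono u d (19/64) (1/11978) 5 0 Hu Hd).
  pose proof (mono u d (19/64) (1/11978) 5 1 Hu Hd).
  pose proof (mono u d (19/64) (1/11978) 5 2 Hu Hd).
  pose proof (mono u d (19/64) (1/11978) 5 3 Hu Hd).
  pose proof (mono u d (19/64) (1/11978) 5 4 Hu Hd).
  pose proof (mono u d (19/64) (1/11978) 6 0 Hu Hd).
  pose proof (mono u d (19/64) (1/11978) 6 1 Hu Hd).
  pose proof (mono u d (19/64) (1/11978) 6 2 Hu Hd).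
  pose proof (mono u d (19/64) (1/11978) 6 3 Hu Hd).
  pose proof (mono u d (19/64) (1/11978) 6 4 Hu Hd).
  pose proof (mono u d (19/64) (1/11978) 7 0 Hu Hd).
  pose proof (mono u d (19/64) (1/11978) 7 1 Hu Hd).
  pose proof (mono u d (19/64) (1/11978) 7 2 Hu Hd).
  pose proof (mono u d (19/64) (1/11978) 7 3 Hu Hd).
  pose proof (mono u d (19/64) (1/11978) 7 4 Hu Hd).
  pose proof (mono u d (19/64) (1/11978) 8 0 Hu Hd).
  pose proof (mono u d (19/64) (1/11978) 8 1 Hu Hd).
  pose proof (mono u d (19/64) (1/11978) 8 2 Hu Hd).
  pose proof (mono u d (19/64) (1/11978) 8 3 Hu Hd).
  pose proof (mono u d (19/64) (1/11978) 8 4 Hu Hd).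
  pose proof (mono u d (19/64) (1/11978) 9 0 Hu Hd).
  pose proof (mono u d (19/64) (1/11978) 9 1 Hu Hd).
  pose proof (mono u d (19/64) (1/11978) 9 2 Hu Hd).
  pose proof (mono u d (19/64) (1/11978) 9 3 Hu Hd).
  pose proof (mono u d (19/64) (1/11978) 10 0 Hu Hd).
  pose proof (mono u d (19/64) (1/11978) 10 1 Hu Hd).
  pose proof (mono u d (19/64) (1/11978) 10 2 Hu Hd).
  lra.
Qed.
Lemma Qf1_piece2 (u d : R) : 0 <= u <= (9/64) -> 0 <= d <= (1/11978) -> 0 <= Qf1 ((11/16) + u) ((333/106) + d).
Proof.
  intros Hu Hd.
  replace (Qf1 ((11/16) + u) ((333/106) + d)) with ((140277293595833840321981/449747023531451917271040) * u^0 * d^0 + (-(315570741043956743584741/4950045856478244372480)) * u^0 * d^1 + (-(18031164991315413842053/280191274894994964480)) * u^0 * d^2 + (-(13391665905240948203/660828478525931520)) * u^0 * d^3 + (-(1438649850483553/779278866186240)) * u^0 * d^4 + (-(124932073326686559836881/98382161397505106903040)) * u^1 * d^0 + (1909164205073983825909/25781488835824189440) * u^1 * d^1 + (64264161026706236933/1250853905781227520) * u^1 * d^2 + (370856007668237879/41301779907870720) * u^1 * d^3 + (2660704081981/6088116142080) * u^1 * d^4 + (176081550820838355557/91094593886578802688) * u^2 * d^0 + (-(50936725390911228107/2148457402985349120)) * u^2 * d^1 + (-(949029795837069607/364832389186191360)) * u^2 * d^2 + (423109331250103/215113437020160) * u^2 * d^3 + (218701264097/761014517760) * u^2 * d^4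 + (-(114510864528578471/86321949227089920)) * u^3 * d^0 + (-(473749199085131/59380271677440)) * u^3 * d^1 + (-(126974156267543/17926119751680)) * u^3 * d^2 + (-(183591033173/152202903552)) * u^3 * d^3 + (-(1029789629/23781703680)) * u^3 * d^4 + (2276186149840372729/8006360790812590080) * u^4 * d^0 + (5934281783017389/1398735288401920) * u^4 * d^1 + (710342653127033/712563260129280) * u^4 * d^2 + (-(4753972183/144049176576)) * u^4 * d^3 + (-(82875827/5945425920)) * u^4 * d^4 + (154711675516489/3971409122426880) * u^5 * d^0 + (250484164009/1873306189824) * u^5 * d^1 + (6464764218299/22267601879040) * u^5 * d^2 + (1115203871/21007171584) * u^5 * d^3 + (142747/92897280) * u^5 * d^4 + (-(176736561871231/6254969367822336)) * u^6 * d^0 + (-(10407606499049/49174287482880)) * u^6 * d^1 + (-(20971529461/397635747840)) * u^6 * d^2 + (-(12416687/9847111680)) * u^6 * d^3 + (3761/11612160) * u^6 * d^4 + (226043691319/97733896372224) * u^7 * d^0 + (210094327/64029020160) * u^7 * d^1 + (-(89418379/14497136640)) * u^7 * d^2 + (-(114391/87920640)) * u^7 * d^3 + (-(11/362880)) * u^7 * d^4 + (47830197517/27148304547840) * u^8 * d^0 + (698691583/128058040320) * u^8 * d^1 + (5493697/4349140992) * u^8 * d^2 + (113/3419136) * u^8 * d^3 + (-(1/181440)) * u^8 * d^4 + (-(2751131/61742269440)) * u^9 * d^0 + (-(40393/339776640)) * u^9 * d^1 + (3079/38465280) * u^9 * d^2 + (1/60480) * u^9 * d^3 + (-(21001/1019329920))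 * u^10 * d^0 + (-(37/534240)) * u^10 * d^1 + (-(1/90720)) * u^10 * d^2) by (unfold Qf1; field).
  pose proof (mono u d (9/64) (1/11978) 0 1 Hu Hd).
  pose proof (mono u d (9/64) (1/11978) 0 2 Hu Hd).
  pose proof (mono u d (9/64) (1/11978) 0 3 Hu Hd).
  pose proof (mono u d (9/64) (1/11978) 0 4 Hu Hd).
  pose proof (mono u d (9/64) (1/11978) 1 0 Hu Hd).
  pose proof (mono u d (9/64) (1/11978) 1 1 Hu Hd).
  pose proof (mono u d (9/64) (1/11978) 1 2 Hu Hd).
  pose proof (mono u d (9/64) (1/11978) 1 3 Hu Hd).
  pose proof (mono u d (9/64) (1/11978) 1 4 Hu Hd).
  pose proof (mono u d (9/64) (1/11978) 2 0 Hu Hd).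
  pose proof (mono u d (9/64) (1/11978) 2 1 Hu Hd).
  pose proof (mono u d (9/64) (1/11978) 2 2 Hu Hd).
  pose proof (mono u d (9/64) (1/11978) 2 3 Hu Hd).
  pose proof (mono u d (9/64) (1/11978) 2 4 Hu Hd).
  pose proof (mono u d (9/64) (1/11978) 3 0 Hu Hd).
  pose proof (mono u d (9/64) (1/11978) 3 1 Hu Hd).
  pose proof (mono u d (9/64) (1/11978) 3 2 Hu Hd).
  pose proof (mono u d (9/64) (1/11978) 3 3 Hu Hd).
  pose proof (mono u d (9/64) (1/11978) 3 4 Hu Hd).
  pose proof (mono u d (9/64) (1/11978) 4 0 Hu Hd).
  pose proof (mono u d (9/64) (1/11978) 4 1 Hu Hd).
  pose proof (mono u d (9/64) (1/11978) 4 2 Hu Hd).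
  pose proof (mono u d (9/64) (1/11978) 4 3 Hu Hd).
  pose proof (mono u d (9/64) (1/11978) 4 4 Hu Hd).
  pose proof (mono u d (9/64) (1/11978) 5 0 Hu Hd).
  pose proof (mono u d (9/64) (1/11978) 5 1 Hu Hd).
  pose proof (mono u d (9/64) (1/11978) 5 2 Hu Hd).
  pose proof (mono u d (9/64) (1/11978) 5 3 Hu Hd).
  pose proof (mono u d (9/64) (1/11978) 5 4 Hu Hd).
  pose proof (mono u d (9/64) (1/11978) 6 0 Hu Hd).
  pose proof (mono u d (9/64) (1/11978) 6 1 Hu Hd).
  pose proof (mono u d (9/64) (1/11978) 6 2 Hu Hd).
  pose proof (mono u d (9/64) (1/11978) 6 3 Hu Hd).
  pose proof (mono u d (9/64) (1/11978) 6 4 Hu Hd).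
  pose proof (mono u d (9/64) (1/11978) 7 0 Hu Hd).
  pose proof (mono u d (9/64) (1/11978) 7 1 Hu Hd).
  pose proof (mono u d (9/64) (1/11978) 7 2 Hu Hd).
  pose proof (mono u d (9/64) (1/11978) 7 3 Hu Hd).
  pose proof (mono u d (9/64) (1/11978) 7 4 Hu Hd).
  pose proof (mono u d (9/64) (1/11978) 8 0 Hu Hd).
  pose proof (mono u d (9/64) (1/11978) 8 1 Hu Hd).
  pose proof (mono u d (9/64) (1/11978) 8 2 Hu Hd).
  pose proof (mono u d (9/64) (1/11978) 8 3 Hu Hd).
  pose proof (mono u d (9/64) (1/11978) 8 4 Hu Hd).
  pose proof (mono u d (9/64) (1/11978) 9 0 Hu Hd).
  pose proof (mono u d (9/64) (1/11978) 9 1 Hu Hd).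
  pose proof (mono u d (9/64) (1/11978) 9 2 Hu Hd).
  pose proof (mono u d (9/64) (1/11978) 9 3 Hu Hd).
  pose proof (mono u d (9/64) (1/11978) 10 0 Hu Hd).
  pose proof (mono u d (9/64) (1/11978) 10 1 Hu Hd).
  pose proof (mono u d (9/64) (1/11978) 10 2 Hu Hd).
  lra.
Qed.
Lemma Qf1_nonneg (t p : R) : 0 <= t <= (53/64) -> (333/106) <= p <= (355/113) -> 0 <= Qf1 t p.
Proof.
  intros Ht Hp.
  destruct (Rle_dec t (25/64)) as [Hc0|Hc0].
  { pose proof (Qf1_piece0 (t - (0)) (p - (333/106)) ltac:(lra) ltac:(lra)) as H.
    replace ((0) + (t - (0))) with t in H by ring. replace ((333/106) + (p - (333/106))) with p in H by ring. exact H. }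
  destruct (Rle_dec t (11/16)) as [Hc1|Hc1].
  { pose proof (Qf1_piece1 (t - (25/64)) (p - (333/106)) ltac:(lra) ltac:(lra)) as H.
    replace ((25/64) + (t - (25/64))) with t in H by ring. replace ((333/106) + (p - (333/106))) with p in H by ring. exact H. }
  { pose proof (Qf1_piece2 (t - (11/16)) (p - (333/106)) ltac:(lra) ltac:(lra)) as H.
    replace ((11/16) + (t - (11/16))) with t in H by ring. replace ((333/106) + (p - (333/106))) with p in H by ring. exact H. }
Qed.

Lemma g_ineq (x : R) : 0 < x < PI/2 -> sin x * (PI^2 - 4*x^2) <= x * PI^2 * cos x.
Proof.
  intros [Hx0 Hx1].
  pose proof PI_lb as Hpl. pose proof PI_ub as Hpu.
  assert (HA : 0 <= PI^2 - 4*x^2) by nra.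
  destruct (Rle_dec x (3/4)) as [Hc|Hc].
  - destruct (pre_cos_bound x 0) as [Hc1 _]; [lra|lra|].
    change (2*0+1)%nat with 1%nat in Hc1. rewrite cos1 in Hc1.
    destruct (sin_bound x 0) as [_ Hs1]; [lra|lra|].
    change (2*(0+1))%nat with 2%nat in Hs1. rewrite sin2 in Hs1.
    pose proof (Qg0_nonneg x PI ltac:(lra) ltac:(lra)) as HQ.
    assert (H1 : sin x * (PI^2 - 4*x^2) <= (x - x^3/6 + x^5/120) * (PI^2 - 4*x^2))
      by (apply Rmult_le_compat_r; lra).
    assert (H2 : x * PI^2 * (1 - x^2/2) <= x * PI^2 * cos x)
      by (apply Rmult_le_compat_l; [nra|lra]).
    assert (H3 : 0 <= x^3 * Qg0 x PI) by (apply Rmult_le_pos; [apply pow_le; lra|exact HQ]).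
    assert (H4 : x * PI^2 * (1 - x^2/2) - (x - x^3/6 + x^5/120) * (PI^2 - 4*x^2) = x^3 * Qg0 x PI)
      by (unfold Qg0; field).
    lra.
  - set (y := PI/2 - x).
    assert (Hy0 : 0 < y) by (unfold y; lra).
    assert (Hy1 : y <= 53/64) by (unfold y; lra).
    assert (Ex : x = PI/2 - y) by (unfold y; ring).
    assert (Ec : cos x = sin y) by (rewrite Ex; apply cos_shift).
    assert (Es : sin x = cos y) by (rewrite Ex; apply sin_shift).
    rewrite Ec, Es.
    destruct (pre_cos_bound y 0) as [_ Hc1]; [lra|lra|].
    change (2*(0+1))%nat with 2%nat in Hc1. rewrite cos2 in Hc1.
    destruct (sin_bound y 0) as [Hs1 _]; [lra|lra|].
    change (2*0+1)%nat with 1%nat in Hs1. rewrite sin1 in Hs1.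
    pose proof (Qg1_nonneg y PI ltac:(lra) ltac:(lra)) as HQ.
    assert (H1 : cos y * (PI^2 - 4*x^2) <= (1 - y^2/2 + y^4/24) * (PI^2 - 4*x^2))
      by (apply Rmult_le_compat_r; lra).
    assert (H2 : x * PI^2 * (y - y^3/6) <= x * PI^2 * sin y)
      by (apply Rmult_le_compat_l; [nra|lra]).
    assert (H3 : 0 <= y * Qg1 y PI) by (apply Rmult_le_pos; lra).
    assert (H4 : x * PI^2 * (y - y^3/6) - (1 - y^2/2 + y^4/24) * (PI^2 - 4*x^2) = y * Qg1 y PI)
      by (rewrite Ex; unfold Qg1; field).
    lra.
Qed.

Lemma f_ineq (x : R) : 0 < x < PI/2 ->
  (PI^4*x - 4*(PI^2-8)*x^3) * cos x <= PI^2*(PI^2-4*x^2) * sin x.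
Proof.
  intros [Hx0 Hx1].
  pose proof PI_lb as Hpl. pose proof PI_ub as Hpu.
  assert (HA : 0 <= PI^2 - 4*x^2) by nra.
  assert (HA2 : 0 <= PI^2*(PI^2 - 4*x^2)) by (apply Rmult_le_pos; nra).
  assert (HB : 0 <= PI^4*x - 4*(PI^2-8)*x^3).
  { assert (0 <= (PI^2-8)*(PI^2 - 4*x^2)) by (apply Rmult_le_pos; nra).
    assert (0 <= x * ((PI^2-8)*(PI^2 - 4*x^2) + 8*PI^2)) by (apply Rmult_le_pos; nra).
    nra. }
  destruct (Rle_dec x (3/4)) as [Hc|Hc].
  - destruct (pre_cos_bound x 1) as [_ Hc1]; [lra|lra|].
    change (2*(1+1))%nat with 4%nat in Hc1. rewrite cos4 in Hc1.
    destruct (sin_bound x 1) as [Hs1 _]; [lra|lra|].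
    change (2*1+1)%nat with 3%nat in Hs1. rewrite sin3 in Hs1.
    pose proof (Qf0_nonneg x PI ltac:(lra) ltac:(lra)) as HQ.
    assert (H1 : (PI^4*x - 4*(PI^2-8)*x^3) * cos x <=
                 (PI^4*x - 4*(PI^2-8)*x^3) * (1 - x^2/2 + x^4/24 - x^6/720 + x^8/40320))
      by (apply Rmult_le_compat_l; lra).
    assert (H2 : PI^2*(PI^2-4*x^2) * (x - x^3/6 + x^5/120 - x^7/5040) <= PI^2*(PI^2-4*x^2) * sin x)
      by (apply Rmult_le_compat_l; lra).
    assert (H3 : 0 <= x^3 * Qf0 x PI) by (apply Rmult_le_pos; [apply pow_le; lra|exact HQ]).
    assert (H4 : PI^2*(PI^2-4*x^2) * (x - x^3/6 + x^5/120 - x^7/5040)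
                 - (PI^4*x - 4*(PI^2-8)*x^3) * (1 - x^2/2 + x^4/24 - x^6/720 + x^8/40320)
                 = x^3 * Qf0 x PI)
      by (unfold Qf0; field).
    lra.
  - set (y := PI/2 - x).
    assert (Hy0 : 0 < y) by (unfold y; lra).
    assert (Hy1 : y <= 53/64) by (unfold y; lra).
    assert (Ex : x = PI/2 - y) by (unfold y; ring).
    assert (Ec : cos x = sin y) by (rewrite Ex; apply cos_shift).
    assert (Es : sin x = cos y) by (rewrite Ex; apply sin_shift).
    rewrite Ec, Es.
    destruct (pre_cos_bound y 1) as [Hc1 _]; [lra|lra|].
    change (2*1+1)%nat with 3%nat in Hc1. rewrite cos3 in Hc1.
    destruct (sin_bound y 1) as [_ Hs1]; [lra|lra|].
    change (2*(1+1))%nat with 4%nat in Hs1. rewrite sin4 in Hs1.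
    pose proof (Qf1_nonneg y PI ltac:(lra) ltac:(lra)) as HQ.
    assert (H1 : (PI^4*x - 4*(PI^2-8)*x^3) * sin y <=
                 (PI^4*x - 4*(PI^2-8)*x^3) * (y - y^3/6 + y^5/120 - y^7/5040 + y^9/362880))
      by (apply Rmult_le_compat_l; lra).
    assert (H2 : PI^2*(PI^2-4*x^2) * (1 - y^2/2 + y^4/24 - y^6/720) <= PI^2*(PI^2-4*x^2) * cos y)
      by (apply Rmult_le_compat_l; lra).
    assert (H3 : 0 <= y^2 * Qf1 y PI) by (apply Rmult_le_pos; [apply pow_le; lra|exact HQ]).
    assert (H4 : PI^2*(PI^2-4*x^2) * (1 - y^2/2 + y^4/24 - y^6/720)
                 - (PI^4*x - 4*(PI^2-8)*x^3) * (y - y^3/6 + y^5/120 - y^7/5040 + y^9/362880)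
                 = y^2 * Qf1 y PI)
      by (rewrite Ex; unfold Qf1; field).
    lra.
Qed.

Lemma mydiv_nonneg (u v : R) : 0 <= u -> 0 < v -> 0 <= u / v.
Proof. intros; unfold Rdiv; apply Rmult_le_pos; [assumption|left; apply Rinv_0_lt_compat; assumption]. Qed.

Theorem propositionA1 (a alpha lam : R) :
  0 < a -> 0 < alpha -> is_robin_lambda1 a alpha lam ->
  2 * alpha * PI ^ 2 / (a * (PI ^ 2 + 2 * alpha * a)) <= lam /\
  lam <= PI ^ 2 / a ^ 2 *
         ((PI ^ 2 + 2 * a * alpha
           - sqrt (64 * a * alpha + (PI ^ 2 - 2 * a * alpha) ^ 2))
          / (2 * (PI ^ 2 - 8))).
Proof.
  intros Ha Hal [[Hl0 Hl1] Heq].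
  pose proof PI_lb as Hpl. pose proof PI_ub as Hpu.
  set (s := sqrt lam).
  assert (Hs0 : 0 < s) by (apply sqrt_lt_R0; lra).
  assert (Hss : s * s = lam) by (apply sqrt_sqrt; lra).
  assert (Hlam2 : lam * a^2 < PI^2).
  { apply Rmult_lt_compat_r with (r := a^2) in Hl1; [|nra].
    replace (PI^2/a^2*a^2) with (PI^2) in Hl1 by (field; lra). lra. }
  set (x := a * s / 2).
  assert (Hx0 : 0 < x) by (unfold x; nra).
  assert (Hx1 : x < PI/2).
  { unfold x. assert ((a*s)^2 < PI^2) by (replace ((a*s)^2) with (lam*a^2) by (rewrite <- Hss; ring); lra).
    assert (a*s < PI) by nra. lra. }
  assert (Hcos : 0 < cos x) by (apply cos_gt_0; lra).
  set (t := tan x).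
  assert (Ht0 : 0 < t) by (apply tan_gt_0; lra).
  assert (Hal' : alpha = s * t) by (rewrite Heq; reflexivity).
  assert (Htc : t * cos x = sin x) by (unfold t, tan; field; lra).
  pose proof (g_ineq x (conj Hx0 Hx1)) as Hg.
  pose proof (f_ineq x (conj Hx0 Hx1)) as Hf.
  assert (Hg' : t * (PI^2 - 4*x^2) <= x * PI^2).
  { apply Rmult_le_reg_r with (cos x); [exact Hcos|].
    replace (t * (PI^2 - 4*x^2) * cos x) with (sin x * (PI^2 - 4*x^2)) by (rewrite <- Htc; ring).
    lra. }
  assert (Hf' : PI^4*x - 4*(PI^2-8)*x^3 <= t * PI^2*(PI^2-4*x^2)).
  { apply Rmult_le_reg_r with (cos x); [exact Hcos|].
    replace (t * PI^2*(PI^2-4*x^2) * cos x) with (PI^2*(PI^2-4*x^2) * sin x) by (rewrite <- Htc; ring).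
    lra. }
  assert (HPI : PI <> 0) by lra.
  split.
  - assert (Hden : 0 < a * (PI ^ 2 + 2 * alpha * a)) by (apply Rmult_lt_0_compat; nra).
    assert (E : lam - 2 * alpha * PI ^ 2 / (a * (PI ^ 2 + 2 * alpha * a))
                = 2 * s * (x * PI^2 - t * (PI^2 - 4*x^2)) / (a * (PI ^ 2 + 2 * alpha * a))).
    { rewrite Hal' in Hden. rewrite <- Hss, Hal'. unfold x. field. repeat split; intro Hz; try lra; rewrite Hz in Hden; lra. }
    assert (0 <= 2 * s * (x * PI^2 - t * (PI^2 - 4*x^2)) / (a * (PI ^ 2 + 2 * alpha * a))).
    { apply mydiv_nonneg; [|exact Hden]. apply Rmult_le_pos; lra. }
    lra.
  - set (k := PI^2 - 8).
    assert (Hk : 0 < k) by (unfold k; nra).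
    set (mu := lam * a^2 / PI^2).
    assert (Hmu : mu <= 1).
    { unfold mu. assert (0 < PI^2) by nra.
      apply Rmult_le_reg_r with (PI^2); [nra|].
      replace (lam * a^2 / PI^2 * PI^2) with (lam * a^2) by (field; lra). lra. }
    assert (Hmu0 : 0 <= mu) by (unfold mu; apply mydiv_nonneg; nra).
    set (Rr := PI^2 + 2*a*alpha - 2*k*mu).
    assert (HR : 0 <= Rr).
    { unfold Rr. assert (k * mu <= k) by (apply Rmult_le_compat_l with (r:=k) in Hmu; lra).
      assert (0 < a*alpha) by nra. unfold k in *. nra. }
    set (Dd := 64 * a * alpha + (PI ^ 2 - 2 * a * alpha) ^ 2).
    assert (ED : Rr^2 - Dd = 16 * k * x / PI^4 * (4*k*x^3 - PI^4*x + t*PI^2*(PI^2-4*x^2))).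
    { unfold Rr, Dd, mu, k. rewrite <- Hss, Hal'. unfold x. field. exact HPI. }
    assert (HD : Dd <= Rr^2).
    { assert (0 <= 16 * k * x / PI^4 * (4*k*x^3 - PI^4*x + t*PI^2*(PI^2-4*x^2))).
      { apply Rmult_le_pos.
        - apply mydiv_nonneg; [nra|]. apply pow_lt; lra.
        - unfold k; lra. }
      lra. }
    assert (HS : sqrt Dd <= Rr).
    { rewrite <- (sqrt_pow2 Rr HR). apply sqrt_le_1_alt. exact HD. }
    assert (E2 : PI ^ 2 / a ^ 2 * ((PI ^ 2 + 2 * a * alpha - sqrt Dd) / (2 * k)) - lam
                 = PI^2 / (2 * k * a^2) * (Rr - sqrt Dd)).
    { unfold Rr, mu. field. split; [lra|split; lra]. }
    assert (0 <= PI^2 / (2 * k * a^2) * (Rr - sqrt Dd)).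
    { apply Rmult_le_pos; [|lra]. apply mydiv_nonneg; [nra|]. apply Rmult_lt_0_compat; [lra|]. apply pow_lt; lra. }
    fold k. fold Dd. lra.
Qed.
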